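(* Let $P$ be a finite poset and $\mathcal{F}\subseteq\mathrm{Hom}(P,\mathbb{N})$ a poset filter. The family of ascents $\{\Lambda\phi:\phi\in\mathcal{F}\}$ has a finite set of inclusion-minimal elements.
   Context: $\mathbb{N}=\{0,1,2,\dots\}$; $\mathrm{Hom}(P,\mathbb{N})$ is the set of isotone maps $P\to\mathbb{N}$ ordered pointwise; a filter is an up-closed subset. The ascent of $\phi$ is $\Lambda\phi=\{(p,i)\in P\times\mathbb{N}:\phi(q)\le i<\phi(p)\text{ for all }q<p\}$. *)

(* Defs.v *)
From mathcomp Require Import all_boot all_order.
Set Implicit Arguments. Unset Strict Implicit. Unset Printing Implicit Defensive.
Import Order.TTheory.

Section Ascent.
Context {disp : Order.disp_t} {P : finPOrderType disp}.

Definition isotone (phi : P -> nat) : Prop :=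
  forall p q : P, (p <= q)%O -> (phi p <= phi q)%N.

Definition hom_filter (F : (P -> nat) -> Prop) : Prop :=
  (forall phi, F phi -> isotone phi) /\
  (forall phi psi, F phi -> isotone psi ->
     (forall p, (phi p <= psi p)%N) -> F psi).

Definition ascent (phi : P -> nat) : pred (P * nat) :=
  fun x => [forall q : P, (q < x.1)%O ==> (phi q <= x.2)%N] && (x.2 < phi x.1)%N.

Definition min_ascent (F : (P -> nat) -> Prop) (A : pred (P * nat)) : Prop :=
  (exists2 phi, F phi & A =i ascent phi) /\
  (forall psi, F psi -> {subset ascent psi <= A} -> {subset A <= ascent psi}).

End Ascent.

(* Main.v *)
Require Import Defs.
From Stdlib Require List.
From Stdlib Require Import Classical FunctionalExtensionality.
From mathcomp Require Import all_boot all_order.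

Definition len n (f g : nat -> nat) := forall i, i < n -> f i <= g i.
Definition upc n (U : (nat -> nat) -> Prop) := forall f g, U f -> len n f g -> U g.
Definition setf (f : nat -> nat) n v := fun i => if i == n then v else f i.

Lemma len_setf n f g v w : len n f g -> v <= w -> len n.+1 (setf f n v) (setf g n w).
Proof.
move=> H vw i; rewrite ltnS leq_eqVlt /setf; case: eqP => // _ /= /H //.
Qed.

Lemma len_setf_l n f g v : len n f g -> v <= g n -> len n.+1 (setf f n v) g.
Proof.
move=> H vw i; rewrite ltnS leq_eqVlt /setf; case: eqP => [->|_ /= /H] //.
Qed.

Lemma len_self n f : len n.+1 f (setf f n (f n)).
Proof. by move=> i _; rewrite /setf; case: eqP => [->|]. Qed.

Lemma dickson n : forall U, upc n U -> exists L : list (nat -> nat),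
  (forall x, List.In x L -> U x) /\
  forall f, U f -> exists x, List.In x L /\ len n x f.
Proof.
elim: n => [|n IH] U hU.
  case: (classic (exists f, U f)) => [[f0 Hf0]|Hn].
    exists [:: f0]; split; first by move=> x [<-|[]].
    by move=> f _; exists f0; split; [left|move=> i].
  exists [::]; split => // f Uf; case: Hn; by exists f.
pose Ui := fun f => exists v, U (setf f n v).
have hUi : upc n Ui.
  move=> f g [v Hv] Hfg; exists v; apply: hU Hv _; exact: len_setf.
have mono : forall x v w, U (setf x n v) -> v <= w -> U (setf x n w).
  move=> x v w Hv vw; apply: hU Hv _; exact: len_setf.
have [Li [Li1 Li2]] := IH Ui hUi.
have [V HV] : exists V, forall x, List.In x Li -> U (setf x n V).
  elim: Li Li1 {Li2} => [|x L IHL] HL; first by exists 0.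
  have [V HV] := IHL (fun y Hy => HL y (or_intror Hy)).
  have [v Hv] := HL x (or_introl erefl).
  exists (maxn V v) => y [<-|Hy].
    by apply: mono Hv _; rewrite leq_maxr.
  by apply: mono (HV y Hy) _; rewrite leq_maxl.
have [L1 [L11 L12]] : exists L1 : list (nat -> nat), (forall x, List.In x L1 -> U x) /\
   forall f, U f -> f n < V -> exists x, List.In x L1 /\ len n.+1 x f.
  elim: (V) => [|W [L1 [L11 L12]]]; first by exists [::].
  pose UW := fun f => U (setf f n W).
  have hUW : upc n UW by move=> f g Hf Hfg; apply: hU Hf _; exact: len_setf.
  have [L2 [L21 L22]] := IH UW hUW.
  exists (L1 ++ List.map (fun h => setf h n W) L2); split.
    move=> x /List.in_app_iff [/L11 //|/List.in_map_iff [h [<- /L21 //]]].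
  move=> f Uf; rewrite ltnS leq_eqVlt => /orP [/eqP fW|fW]; last first.
    have [x [Hx Hxf]] := L12 f Uf fW.
    by exists x; split => //; apply/List.in_app_iff; left.
  have : UW f by apply: hU Uf _; rewrite /UW -fW; exact: len_self.
  move/L22 => [h [Hh Hhf]]; exists (setf h n W); split.
    by apply/List.in_app_iff; right; apply: List.in_map.
  by apply: len_setf_l; rewrite // fW.
exists (List.map (fun g => setf g n V) Li ++ L1); split.
  move=> x /List.in_app_iff [/List.in_map_iff [h [<- /HV //]]|/L11 //].
move=> f Uf; case: (ltnP (f n) V) => fV.
  have [x [Hx Hxf]] := L12 f Uf fV.
  by exists x; split => //; apply/List.in_app_iff; right.
have : Ui f by exists (f n); apply: hU Uf _; exact: len_self.
move/Li2 => [x [Hx Hxf]]; exists (setf x n V); split.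
  by apply/List.in_app_iff; left; apply: List.in_map.
exact: len_setf_l.
Qed.

Lemma bound_one n (x : nat -> nat) : exists B, forall i, i < n -> x i <= B.
Proof.
elim: n => [|n [B HB]]; first by exists 0.
exists (maxn B (x n)) => i; rewrite ltnS leq_eqVlt => /orP [/eqP ->|/HB h].
  by rewrite leq_maxr.
by apply: leq_trans h (leq_maxl _ _).
Qed.

Lemma bound_list n (L : list (nat -> nat)) :
  exists M, forall x, List.In x L -> forall i, i < n -> x i <= M.
Proof.
elim: L => [|x L [M HM]]; first by exists 0.
have [B HB] := bound_one n x.
exists (maxn M B) => y [<-|Hy] i Hi.
  by apply: leq_trans (HB i Hi) (leq_maxr _ _).
by apply: leq_trans (HM y Hy i Hi) (leq_maxl _ _).
Qed.

Lemma dickson_bound n U : upc n U -> exists M, forall f, U f ->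
  exists x, U x /\ len n x f /\ forall i, i < n -> x i <= M.
Proof.
move=> hU; have [L [L1 L2]] := @dickson n U hU.
have [M HM] := bound_list n L.
exists M => f /L2 [x [Hx Hxf]]; exists x; split; first exact: L1.
by split => //; apply: HM.
Qed.

Lemma In_mem (T : eqType) (x : T) s : x \in s -> List.In x s.
Proof. elim: s => //= y s IH; rewrite inE => /orP [/eqP ->|/IH]; auto. Qed.

Theorem lemma1p5 (disp : Order.disp_t) (P : finPOrderType disp)
  (F : (P -> nat) -> Prop) :
  hom_filter F ->
  exists s : seq (P -> nat),
    forall A : pred (P * nat), min_ascent F A ->
      exists phi, List.In phi s /\ A =i ascent phi.
Proof.
move=> [Fiso Fup].
pose U := fun f : nat -> nat => exists phi, F phi /\ forall p : P, phi p <= f (enum_rank p).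
have hU : upc #|P| U.
  move=> f g [phi [Fphi H]] Hle; exists phi; split => // p.
  exact: leq_trans (H p) (Hle _ (ltn_ord _)).
have [M HM] := @dickson_bound #|P| U hU.
exists [seq (fun p => nat_of_ord (g p)) | g : {ffun P -> 'I_M.+1} <- enum {ffun P -> 'I_M.+1}].
move=> A [[phi Fphi HA] Hmin].
pose h := fun i => if insub i is Some j then phi (enum_val (j : 'I_#|P|)) else 0.
have hE : forall p, h (enum_rank p) = phi p.
  by move=> p; rewrite /h valK enum_rankK.
have Uh : U h by exists phi; split => // p; rewrite hE.
have [x [[phi0 [Fphi0 H0]] [Hxh HxM]]] := HM h Uh.
pose psi := fun p => minn (phi p) M.
have Fpsi : F psi.
  apply: Fup Fphi0 _ _.
    move=> p q pq; rewrite /psi leq_min geq_minr andbT.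
    exact: leq_trans (geq_minl _ _) (Fiso _ Fphi _ _ pq).
  move=> p; rewrite /psi leq_min.
  have := Hxh _ (ltn_ord (enum_rank p)); rewrite hE => e1.
  have e2 := HxM _ (ltn_ord (enum_rank p)).
  by rewrite (leq_trans (H0 p) e1) (leq_trans (H0 p) e2).
have sub : {subset ascent psi <= A}.
  move=> [p i]; rewrite HA /ascent /= => /andP [/forallP Hq Hi].
  rewrite /= leq_min in Hi; case/andP: Hi => Hi1 Hi2; rewrite /=.
  apply/andP; split => //; apply/forallP => q; apply/implyP => qp.
  have := implyP (Hq q) qp; rewrite geq_min => /orP [//|Mi].
  by have := leq_trans Hi2 Mi; rewrite ltnn.
have sub2 := Hmin psi Fpsi sub.
pose g := [ffun p => inord (psi p) : 'I_M.+1].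
exists (fun p => nat_of_ord (g p)); split.
  by apply: List.in_map; apply: In_mem; rewrite mem_enum.
have -> : (fun p => nat_of_ord (g p)) = psi.
  by apply: functional_extensionality => p; rewrite ffunE inordK // ltnS geq_minr.
by move=> y; apply/idP/idP; [apply: sub2 | apply: sub].
Qed.
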